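(* Let $G=G_1\times G_2$ be a product of commutative groups, $V_1\subset G_1$, $V_2\subset G_2$ finite sets, $U=V_1\times V_2$, and $1<p<\infty$. Then $\beta_p(U)=\beta_p(V_1)\beta_p(V_2)$, where $\beta_p(U)$ is computed in $G$ and $\beta_p(V_i)$ in $G_i$.
   Context: For a finite set $U$ in a commutative group $K$ and $1<p<\infty$, $\beta_p(U)=\inf_{A,B}\frac{|A+B+U|}{|A|^{1/p}|B|^{1-1/p}}$, the infimum over all nonempty finite $A,B\subset K$. *)

(* Defs.v *)
From HB Require Import structures.
From mathcomp Require Import all_boot all_order all_algebra.
From mathcomp Require Import finmap.
From mathcomp Require Import all_classical all_reals all_analysis.
Set Implicit Arguments. Unset Strict Implicit. Unset Printing Implicit Defensive.
Import Order.TTheory GRing.Theory Num.Theory.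
Local Open Scope classical_set_scope.
Local Open Scope ring_scope.
Local Open Scope fset_scope.

Definition sumset (K : zmodType) (A B : {fset K}) : {fset K} :=
  [fset (a + b)%R | a in A, b in B].

Definition fsetprod (K1 K2 : zmodType) (V1 : {fset K1}) (V2 : {fset K2})
  : {fset (K1 * K2)%type} := [fset ((x, y) : K1 * K2)%type | x : K1 in V1, y : K2 in V2].

Definition beta (R : realType) (K : zmodType) (p : R) (U : {fset K}) : R :=
  inf [set x : R | exists A B : {fset K},
        [/\ A != fset0, B != fset0 &
         x = (#|` sumset (sumset A B) U|%:R)
             / ((#|` A|%:R) `^ (1 / p) * (#|` B|%:R) `^ (1 - 1 / p))]].

(* Main.v *)
Require Import Defs.
From HB Require Import structures.
From mathcomp Require Import all_boot all_order all_algebra.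
From mathcomp Require Import finmap.
From mathcomp Require Import all_classical all_reals all_analysis.
From mathcomp Require Import ring lra.
Import Order.TTheory GRing.Theory Num.Theory.
Set Implicit Arguments. Unset Strict Implicit. Unset Printing Implicit Defensive.
Local Open Scope fset_scope.
Local Open Scope ring_scope.

Section Pw.
Variable R : realType.

Lemma young_e (x y e : R) : 0 <= x -> 0 <= y -> 0 < e -> e < 1 ->
  x `^ e * y `^ (1 - e) <= e * x + (1 - e) * y.
Proof.
move=> x0 y0 e0 e1.
have e'0 : 0 < 1 - e by rewrite subr_gt0.
have i1 : 0 < e^-1 by rewrite invr_gt0.
have i2 : 0 < (1 - e)^-1 by rewrite invr_gt0.
have := @conjugate_powR R (x `^ e) (y `^ (1 - e)) e^-1 (1 - e)^-1
  (powR_ge0 _ _) (powR_ge0 _ _) i1 i2.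
rewrite !invrK subrKC => /(_ erefl).
rewrite -!powRrM !mulfV ?gt_eqF// !powRr1// => H.
by rewrite (le_trans H)// [_ * e]mulrC [_ * (1 - e)]mulrC.
Qed.

Lemma superadd (a b u w e : R) : 0 < a -> 0 < b -> 0 <= u -> 0 <= w ->
  0 < e -> e < 1 ->
  a `^ e * b `^ (1 - e) + u `^ e * w `^ (1 - e) <= (a + u) `^ e * (b + w) `^ (1 - e).
Proof.
move=> a0 b0 u0 w0 e0 e1.
set P := a + u; set Q := b + w.
have P0 : 0 < P by rewrite /P ltr_wpDr.
have Q0 : 0 < Q by rewrite /Q ltr_wpDr.
have dec : forall c D : R, 0 < D -> c = D * (c / D).
  by move=> c D D0; rewrite mulrC divfK // gt_eqF.
rewrite [in X in X + _](dec a P)// [in X in X + _](dec b Q)//.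
rewrite [in X in _ + X](dec u P)// [in X in _ + X](dec w Q)//.
have aP : 0 <= a / P := divr_ge0 (ltW a0) (ltW P0).
have bQ : 0 <= b / Q := divr_ge0 (ltW b0) (ltW Q0).
have uP : 0 <= u / P := divr_ge0 u0 (ltW P0).
have wQ : 0 <= w / Q := divr_ge0 w0 (ltW Q0).
rewrite (powRM _ (ltW P0) aP) (powRM _ (ltW P0) uP) (powRM _ (ltW Q0) bQ) (powRM _ (ltW Q0) wQ).
set K := P `^ e * Q `^ (1 - e).
have K0 : 0 <= K by rewrite /K mulr_ge0 ?powR_ge0.
have -> : P `^ e * (a / P) `^ e * (Q `^ (1 - e) * (b / Q) `^ (1 - e)) +
  P `^ e * (u / P) `^ e * (Q `^ (1 - e) * (w / Q) `^ (1 - e)) =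
  K * ((a / P) `^ e * (b / Q) `^ (1 - e) + (u / P) `^ e * (w / Q) `^ (1 - e)).
  by rewrite /K; ring.
rewrite -[X in _ <= X]mulr1 ler_wpM2l//.
apply: (le_trans (lerD (young_e aP bQ e0 e1) (young_e uP wQ e0 e1))).
have -> : e * (a / P) + (1 - e) * (b / Q) + (e * (u / P) + (1 - e) * (w / Q))
  = e * ((a + u) / P) + (1 - e) * ((b + w) / Q) by rewrite !mulrDl; ring.
by rewrite -/P -/Q !divff ?gt_eqF// !mulr1 subrKC.
Qed.
End Pw.

Section Sumset.
Variable K : zmodType.

Lemma sumsetP (A B : {fset K}) z :
  reflect (exists2 a, a \in A & exists2 b, b \in B & z = a + b) (z \in sumset A B).
Proof.
rewrite /sumset; apply: (iffP idP).
  by case/imfset2P => a aA [b bB ->]; exists a => //; exists b.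
by case=> a aA [b bB ->]; apply/imfset2P; exists a => //; exists b.
Qed.

Lemma mem_sumset (A B : {fset K}) a b : a \in A -> b \in B -> a + b \in sumset A B.
Proof. by move=> aA bB; apply/sumsetP; exists a => //; exists b. Qed.

Lemma sumset0 (A : {fset K}) : sumset A fset0 = fset0.
Proof. by apply/fsetP => z; rewrite in_fset0; apply/sumsetP => -[a _ [b]]. Qed.

Lemma sumset0l (A : {fset K}) : sumset fset0 A = fset0.
Proof. by apply/fsetP => z; rewrite in_fset0; apply/sumsetP => -[a]. Qed.

Lemma sumsetS (A A' B B' : {fset K}) : A `<=` A' -> B `<=` B' ->
  sumset A B `<=` sumset A' B'.
Proof.
move=> /fsubsetP AA /fsubsetP BB; apply/fsubsetP => z /sumsetP[a aA [b bB ->]].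
by apply: mem_sumset; [apply: AA | apply: BB].
Qed.
End Sumset.

Section Sums.
Variable R : realType.
Variable T : choiceType.

Lemma sum_const_fset (A : {fset T}) (c : R) : \sum_(x <- A) c = #|` A|%:R * c.
Proof.
rewrite /=; elim: (enum_fset A) => [|a s IH]; first by rewrite big_nil mul0r.
by rewrite big_cons IH /= -addn1 natrD mulrDl mul1r addrC.
Qed.

Lemma sum_fsubset (A B : {fset T}) (F : T -> R) : A `<=` B ->
  (forall x, x \in B -> 0 <= F x) -> \sum_(x <- A) F x <= \sum_(x <- B) F x.
Proof.
move=> AB F0.
have -> : \sum_(x <- A) F x = \sum_(x <- A) (if x \in A then F x else 0).
  by apply: eq_fbigr => x ->.
rewrite (big_fset_incl _ AB); last by move=> x _ /negbTE ->.
rewrite big_seq [leRHS]big_seq; apply: ler_sum => x xB.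
by case: ifP => // _; apply: F0.
Qed.

Lemma seq_min (f : T -> R) (s : seq T) x : x \in s ->
  exists2 y, y \in s & forall z, z \in s -> f y <= f z.
Proof.
case: s => // a s _; elim: s a => [|b s IH] a.
  by exists a; rewrite ?mem_seq1// => z; rewrite mem_seq1 => /eqP->.
have [y ys ymin] := IH b.
have [le|lt] := leP (f a) (f y).
  exists a; first by rewrite mem_head.
  move=> z; rewrite inE => /orP[/eqP->//|zs]; exact: le_trans le (ymin _ zs).
exists y; first by rewrite inE ys orbT.
move=> z; rewrite inE => /orP[/eqP->|zs]; [exact: ltW|exact: ymin].
Qed.
End Sums.

Section Fun.
Variables (R : realType) (K : zmodType) (V : {fset K}) (e bet gam : R).
Hypothesis e0 : 0 < e.
Hypothesis e1 : e < 1.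
Hypothesis gam0 : 0 <= gam.
Hypothesis Hset : forall S T : {fset K}, S != fset0 -> T != fset0 ->
  bet * (#|` S|%:R `^ e * #|` T|%:R `^ (1 - e)) <= #|` sumset (sumset S T) V|%:R.

Let Z (X Y : {fset K}) := sumset (sumset X Y) V.

Lemma memZ X Y z : reflect (exists x, exists y, exists v,
   [/\ x \in X, y \in Y, v \in V & z = x + y + v]) (z \in Z X Y).
Proof.
rewrite /Z; apply: (iffP (sumsetP _ _ _)).
  by case=> w /sumsetP[x xX [y yY ->]] [v vV ->]; exists x, y, v.
by case=> x [y [v [xX yY vV ->]]]; exists (x + y); [exact: mem_sumset|exists v].
Qed.

Lemma fun_ineq n : forall (X Y : {fset K}) (f g h : K -> R),
  (#|` X| + #|` Y| <= n)%N ->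
  (forall x, x \in X -> 0 < f x) -> (forall y, y \in Y -> 0 < g y) ->
  (forall z, z \in Z X Y -> 0 <= h z) ->
  (forall x y v, x \in X -> y \in Y -> v \in V ->
     gam * (f x `^ e * g y `^ (1 - e)) <= h (x + y + v)) ->
  gam * bet * ((\sum_(x <- X) f x) `^ e * (\sum_(y <- Y) g y) `^ (1 - e))
    <= \sum_(z <- Z X Y) h z.
Proof.
have e'0 : 0 < 1 - e by rewrite subr_gt0.
have hpos : forall X Y (h : K -> R), (forall z, z \in Z X Y -> 0 <= h z) ->
    0 <= \sum_(z <- Z X Y) h z.
  by move=> X Y h h0; rewrite big_seq; apply: sumr_ge0 => z /h0.
have empty_case : forall (X Y : {fset K}) (f g h : K -> R),
  (X = fset0 \/ Y = fset0) ->
  (forall z, z \in Z X Y -> 0 <= h z) ->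
  gam * bet * ((\sum_(x <- X) f x) `^ e * (\sum_(y <- Y) g y) `^ (1 - e))
    <= \sum_(z <- Z X Y) h z.
  move=> X Y f g h [->|->] h0.
    by rewrite big_seq_fset0 powR0 ?gt_eqF// mul0r mulr0 hpos.
  by rewrite big_seq_fset0 (@powR0 _ (1 - e)) ?gt_eqF// mulr0 mulr0 hpos.
elim: n => [|n IH] X Y f g h.
  case: (fset_0Vmem X) => [X0|[x xX]]; first by move=> _ _ _ h0 _; apply: empty_case h0; left.
  by rewrite (cardfsD1 x) xX.
move=> card f0 g0 h0 hyp.
case: (fset_0Vmem X) => [X0|[x1 xX]]; first by apply: empty_case h0; left.
case: (fset_0Vmem Y) => [Y0|[y1 yY]]; first by apply: empty_case h0; right.
have [x0 x0X x0min] := seq_min f xX.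
have [y0 y0Y y0min] := seq_min g yY.
set U := \sum_(x <- X) f x.
set W := \sum_(y <- Y) g y.
set nX : R := #|` X|%:R.
set nY : R := #|` Y|%:R.
have nX0 : 0 < nX by rewrite /nX ltr0n (cardfsD1 x1) xX.
have nY0 : 0 < nY by rewrite /nY ltr0n (cardfsD1 y1) yY.
have UX : nX * f x0 <= U.
  by rewrite -sum_const_fset big_seq [leRHS]big_seq; apply: ler_sum => x /x0min.
have WY : nY * g y0 <= W.
  by rewrite -sum_const_fset big_seq [leRHS]big_seq; apply: ler_sum => y /y0min.
have fx00 : 0 < f x0 := f0 _ x0X.
have gy00 : 0 < g y0 := g0 _ y0Y.
have U0 : 0 < U by apply: lt_le_trans UX; rewrite mulr_gt0.
have W0 : 0 < W by apply: lt_le_trans WY; rewrite mulr_gt0.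
set p := f x0 * nX / U.
set q := g y0 * nY / W.
have p0 : 0 < p by rewrite /p divr_gt0 ?mulr_gt0.
have q0 : 0 < q by rewrite /q divr_gt0 ?mulr_gt0.
have p1 : p <= 1 by rewrite /p ler_pdivrMr // mul1r mulrC.
have [th [th0 thp thq th_or]] : exists th, [/\ 0 < th, th <= p, th <= q & (th = p \/ th = q)].
  have [pq|qp] := leP p q; first by exists p; split => //; left.
  by exists q; split => //; [exact: ltW | right].
have th1 : th <= 1 := le_trans thp p1.
set a := th * U / nX.
set b := th * W / nY.
have a0 : 0 < a by rewrite /a divr_gt0 ?mulr_gt0.
have b0 : 0 < b by rewrite /b divr_gt0 ?mulr_gt0.
have a_le : a <= f x0.
  have -> : f x0 = p * U / nX by rewrite /p; field; rewrite ?gt_eqF.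
  by rewrite /a ler_pM2r ?invr_gt0 // ler_pM2r.
have b_le : b <= g y0.
  have -> : g y0 = q * W / nY by rewrite /q; field; rewrite ?gt_eqF.
  by rewrite /b ler_pM2r ?invr_gt0 // ler_pM2r.
have a_or : a = f x0 \/ b = g y0.
  rewrite /a /b; case: th_or => ->; [left | right]; rewrite /p /q; field; rewrite ?gt_eqF //.
have fa : forall x, x \in X -> a <= f x := fun x xX => le_trans a_le (x0min x xX).
have gb : forall y, y \in Y -> b <= g y := fun y yY => le_trans b_le (y0min y yY).
set c := gam * (a `^ e * b `^ (1 - e)).
have c0 : 0 <= c by rewrite /c mulr_ge0 // mulr_ge0 // powR_ge0.
have hc : forall z, z \in Z X Y -> c <= h z.
  move=> z /memZ[x [y [v [xX' yY' vV ->]]]].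
  apply: le_trans (hyp x y v xX' yY' vV); rewrite /c ler_wpM2l //.
  apply: ler_pM; rewrite ?powR_ge0 //; apply: ge0_ler_powR; rewrite ?nnegrE. all: try by apply: ltW.
  - exact: ltW (f0 x xX').
  - exact: fa.
  - exact: ltW (g0 y yY').
  - exact: gb.

set X' := [fset x in X | a < f x].
set Y' := [fset y in Y | b < g y].
have XX : X' `<=` X by apply/fsubsetP => x; rewrite !inE => /andP[].
have YY : Y' `<=` Y by apply/fsubsetP => y; rewrite !inE => /andP[].
have ZS : Z X' Y' `<=` Z X Y := sumsetS (sumsetS XX YY) (fsubset_refl V).
have card' : (#|` X'| + #|` Y'| <= n)%N.
  have cX := fsubset_leq_card XX; have cY := fsubset_leq_card YY.
  case: a_or => [ax|bx].
    have : (#|` X'| < #|` X|)%N.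
      rewrite (cardfsD1 x0 X) x0X add1n ltnS; apply: fsubset_leq_card.
      apply/fsubsetP => x; rewrite !inE => /andP[xX' ax']; rewrite xX' andbT.
      by apply: contraTneq ax' => ->; rewrite -ax ltxx.
    by move=> lt; rewrite -ltnS; apply: leq_trans card; rewrite -addSn leq_add.
  have : (#|` Y'| < #|` Y|)%N.
    rewrite (cardfsD1 y0 Y) y0Y add1n ltnS; apply: fsubset_leq_card.
    apply/fsubsetP => y; rewrite !inE => /andP[yY' by']; rewrite yY' andbT.
    by apply: contraTneq by' => ->; rewrite -bx ltxx.
  by move=> lt; rewrite -ltnS; apply: leq_trans card; rewrite -addnS leq_add.
pose f' := fun x => f x - a.
pose g' := fun y => g y - b.
pose h' := fun z => h z - c.
have IHr : gam * bet * ((\sum_(x <- X') f' x) `^ e * (\sum_(y <- Y') g' y) `^ (1 - e))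
    <= \sum_(z <- Z X' Y') h' z.
  apply: IH card' _ _ _ _.
  - by move=> x; rewrite !inE /f' subr_gt0 => /andP[].
  - by move=> y; rewrite !inE /g' subr_gt0 => /andP[].
  - by move=> z /(fsubsetP ZS) zZ; rewrite /h' subr_ge0 hc.
  move=> x y v; rewrite !inE => /andP[xX' ax] /andP[yY' by'] vV.
  rewrite /h' lerBrDl; apply: le_trans (hyp x y v xX' yY' vV).
  rewrite /c -mulrDr ler_wpM2l //.
  have := @superadd R a b (f' x) (g' y) e a0 b0 _ _ e0 e1.
  rewrite /f' /g' !subrKC; apply; rewrite subr_ge0 ltW //.
have SX : \sum_(x <- X') f' x = (1 - th) * U.
  rewrite (big_fset_incl _ XX); last first.
    move=> x xX' xnX; rewrite /f'; apply/eqP; rewrite subr_eq0 eq_le fa // andbT.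
    by move: xnX; rewrite !inE xX' /= -leNgt.
  rewrite /f' sumrB sum_const_fset -/nX -/U /a; field; rewrite gt_eqF //.
have SY : \sum_(y <- Y') g' y = (1 - th) * W.
  rewrite (big_fset_incl _ YY); last first.
    move=> y yY' ynY; rewrite /g'; apply/eqP; rewrite subr_eq0 eq_le gb // andbT.
    by move: ynY; rewrite !inE yY' /= -leNgt.
  rewrite /g' sumrB sum_const_fset -/nY -/W /b; field; rewrite gt_eqF //.
have powprod : forall t : R, 0 <= t -> t `^ e * t `^ (1 - e) = t.
  move=> t t0; rewrite -powRD; first by rewrite subrKC powRr1.
  by rewrite subrKC oner_eq0.
set G := U `^ e * W `^ (1 - e).
have E1 : c * (nX `^ e * nY `^ (1 - e)) = gam * th * G.
  have -> : c * (nX `^ e * nY `^ (1 - e)) = gam * ((a * nX) `^ e * (b * nY) `^ (1 - e)).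
    by rewrite /c (powRM _ (ltW a0) (ltW nX0)) (powRM _ (ltW b0) (ltW nY0)); ring.
  have -> : a * nX = th * U by rewrite /a; field; rewrite gt_eqF.
  have -> : b * nY = th * W by rewrite /b; field; rewrite gt_eqF.
  rewrite (powRM _ (ltW th0) (ltW U0)) (powRM _ (ltW th0) (ltW W0)).
  have := powprod th (ltW th0); rewrite /G => P; rewrite -[in RHS]P; ring.
have th1' : 0 <= 1 - th by rewrite subr_ge0.
have E2 : ((1 - th) * U) `^ e * ((1 - th) * W) `^ (1 - e) = (1 - th) * G.
  rewrite (powRM _ th1' (ltW U0)) (powRM _ th1' (ltW W0)).
  have := powprod _ th1'; rewrite /G => P; rewrite -[in RHS]P; ring.
have XneX : X != fset0 by apply/fset0Pn; exists x1.
have YneY : Y != fset0 by apply/fset0Pn; exists y1.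
have S3 : c * (bet * (nX `^ e * nY `^ (1 - e))) <= c * #|` Z X Y|%:R.
  by apply: ler_wpM2l => //; have := Hset XneX YneY.
have S2 : \sum_(z <- Z X' Y') h' z <= \sum_(z <- Z X Y) h' z.
  by apply: sum_fsubset ZS _ => z zZ; rewrite /h' subr_ge0 hc.
have S1 : \sum_(z <- Z X Y) h z = c * #|` Z X Y|%:R + \sum_(z <- Z X Y) h' z.
  rewrite mulrC -sum_const_fset -big_split /=; apply: eq_bigr => z _.
  by rewrite /h' addrC subrK.
rewrite S1; apply: le_trans (lerD S3 (le_trans IHr S2)).
have E1' : c * (bet * (nX `^ e * nY `^ (1 - e))) = bet * (gam * th * G) by rewrite mulrCA E1.
rewrite SX SY E2 -/G E1'; rewrite le_eqVlt; apply/orP; left; apply/eqP; ring.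
Qed.
End Fun.

Section Prod.
Variables (K1 K2 : zmodType).

Definition fib2 (C : {fset (K1 * K2)%type}) (z : K1) : {fset K2} :=
  [fset w.2 | w in [fset w in C | w.1 == z]].

Lemma mem_fib2 C z y : (y \in fib2 C z) = ((z, y) \in C).
Proof.
apply/idP/idP.
  case/imfsetP => w /=; rewrite !inE => /andP[wC /eqP w1] ->.
  by rewrite -w1 -surjective_pairing.
by move=> zyC; apply/imfsetP; exists (z, y) => //=; rewrite !inE zyC eqxx.
Qed.

Lemma card_fib2 C z : #|` fib2 C z| = \sum_(w <- C | w.1 == z) 1%N.
Proof.
rewrite card_in_imfset /=; last first.
  move=> w w'; rewrite !inE => /andP[_ /eqP w1] /andP[_ /eqP w1'] w2.
  by rewrite [w]surjective_pairing [w']surjective_pairing w1 w1' w2.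
by rewrite big_fset_condE card_fset_sum1.
Qed.

Lemma fiber_card (C : {fset (K1 * K2)%type}) (Zs : {fset K1}) :
  (forall w, w \in C -> w.1 \in Zs) ->
  (\sum_(z <- Zs) #|` fib2 C z|)%N = #|` C|.
Proof.
move=> CZ.
under eq_bigr => z _ do rewrite card_fib2 big_mkcond.
rewrite exchange_big /= card_fset_sum1 big_seq [RHS]big_seq.
apply: eq_bigr => w wC.
rewrite (big_fsetD1 w.1) ?CZ //= eqxx big1_fset // => z.
by rewrite !inE => /andP[zw _] _; rewrite eq_sym (negbTE zw).
Qed.

Lemma mem_fsetprod (A : {fset K1}) (B : {fset K2}) w :
  (w \in fsetprod A B) = (w.1 \in A) && (w.2 \in B).
Proof.
apply/idP/idP.
  by case/imfset2P => a aA [b bB ->] /=; rewrite aA bB.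
case/andP => aA bB; apply/imfset2P; exists w.1 => //; exists w.2 => //.
exact: surjective_pairing.
Qed.

Lemma card_fsetprod (A : {fset K1}) (B : {fset K2}) :
  #|` fsetprod A B| = (#|` A| * #|` B|)%N.
Proof.
rewrite -(@fiber_card (fsetprod A B) A); last by move=> w; rewrite mem_fsetprod => /andP[].
have -> : #|` A| = (\sum_(a <- A) 1)%N by rewrite card_fset_sum1.
rewrite big_distrl /= big_seq [RHS]big_seq; apply: eq_bigr => a aA.
rewrite mul1n; congr (#|` _|); apply/fsetP => y.
by rewrite mem_fib2 mem_fsetprod /= aA.
Qed.
End Prod.

Section Beta.
Variables (R : realType) (K : zmodType) (p : R).
Hypothesis p1 : 1 < p.

Definition den (A B : {fset K}) : R := #|` A|%:R `^ (1 / p) * #|` B|%:R `^ (1 - 1 / p).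

Lemma den_gt0 A B : A != fset0 -> B != fset0 -> 0 < den A B.
Proof.
move=> A0 B0; rewrite /den mulr_gt0 // powR_gt0 // ltr0n cardfs_gt0 //.
Qed.

Lemma beta_lb (U A B : {fset K}) : A != fset0 -> B != fset0 ->
  beta p U <= #|` sumset (sumset A B) U|%:R / den A B.
Proof.
move=> A0 B0; rewrite /beta; apply: ge_inf; last by exists A, B.
exists 0 => x [A' [B' [A'0 B'0 ->]]].
by rewrite divr_ge0 // ltW // den_gt0.
Qed.

Lemma beta_glb (U : {fset K}) x : (forall A B : {fset K}, A != fset0 -> B != fset0 ->
  x <= #|` sumset (sumset A B) U|%:R / den A B) -> x <= beta p U.
Proof.
move=> H; apply: lb_le_inf.
  exists (#|` sumset (sumset [fset 0] [fset 0]) U|%:R / den [fset 0] [fset 0]).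
  exists [fset 0], [fset 0]; split => //; apply/fset0Pn; exists 0; by rewrite inE.
move=> y [A [B [A0 B0 ->]]]; exact: H.
Qed.

Lemma beta_ge0 (U : {fset K}) : 0 <= beta p U.
Proof. by apply: beta_glb => A B A0 B0; rewrite divr_ge0 // ltW // den_gt0. Qed.

Lemma beta_set (U S T : {fset K}) : S != fset0 -> T != fset0 ->
  beta p U * (#|` S|%:R `^ (1 / p) * #|` T|%:R `^ (1 - 1 / p))
    <= #|` sumset (sumset S T) U|%:R.
Proof.
by move=> S0 T0; rewrite -ler_pdivlMr ?den_gt0 //; apply: beta_lb.
Qed.
End Beta.

Lemma sumset_prod (K1 K2 : zmodType) (A1 B1 V1 : {fset K1}) (A2 B2 V2 : {fset K2}) :
  sumset (sumset (fsetprod A1 A2) (fsetprod B1 B2)) (fsetprod V1 V2) =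
  fsetprod (sumset (sumset A1 B1) V1) (sumset (sumset A2 B2) V2).
Proof.
apply/fsetP => w; rewrite mem_fsetprod; apply/idP/idP.
  case/sumsetP => ab /sumsetP[a aA [b bB ->]] [v vV ->] /=.
  move: aA bB vV; rewrite !mem_fsetprod => /andP[a1 a2] /andP[b1 b2] /andP[v1 v2].
  by rewrite !mem_sumset.
case/andP => /sumsetP[ab1 /sumsetP[a1 a1A [b1 b1B ->]] [v1 v1V w1]].
case/sumsetP => [ab2 /sumsetP[a2 a2A [b2 b2B ->]] [v2 v2V w2]].
have -> : w = (a1, a2) + (b1, b2) + (v1, v2).
  by rewrite [w]surjective_pairing w1 w2.
by rewrite !mem_sumset // mem_fsetprod /= ?a1A ?a2A ?b1B ?b2B ?v1V ?v2V.
Qed.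

Lemma lower (R : realType) (K1 K2 : zmodType) (V1 : {fset K1}) (V2 : {fset K2})
  (p : R) : 1 < p -> forall A B : {fset (K1 * K2)%type},
  beta p V1 * beta p V2 * (#|` A|%:R `^ (1 / p) * #|` B|%:R `^ (1 - 1 / p))
   <= #|` sumset (sumset A B) (fsetprod V1 V2)|%:R.
Proof.
move=> p1 A B.
set e := 1 / p.
have p0 : 0 < p by apply: lt_trans p1.
have e0 : 0 < e by rewrite /e divr_gt0.
have e1 : e < 1 by rewrite /e ltr_pdivrMr // mul1r.
set C := sumset (sumset A B) (fsetprod V1 V2).
set X := [fset w.1 | w in A].
set Y := [fset w.1 | w in B].
pose f := fun x => (#|` fib2 A x|%:R : R).
pose g := fun x => (#|` fib2 B x|%:R : R).
pose h := fun x => (#|` fib2 C x|%:R : R).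
have fibne : forall (D : {fset (K1 * K2)%type}) x, x \in [fset w.1 | w in D] ->
    fib2 D x != fset0.
  move=> D x /imfsetP[w /= wD ->]; apply/fset0Pn; exists w.2.
  by rewrite mem_fib2 -surjective_pairing.
have fpos : forall x, x \in X -> 0 < f x.
  by move=> x xX; rewrite /f ltr0n cardfs_gt0 fibne.
have gpos : forall x, x \in Y -> 0 < g x.
  by move=> x xX; rewrite /g ltr0n cardfs_gt0 fibne.
have hpos : forall z, z \in sumset (sumset X Y) V1 -> 0 <= h z.
  by move=> z _; rewrite /h ler0n.
have hyp : forall x y v, x \in X -> y \in Y -> v \in V1 ->
    beta p V2 * (f x `^ e * g y `^ (1 - e)) <= h (x + y + v).
  move=> x y v xX yY vV.
  apply: le_trans (beta_set p V2 (fibne _ _ xX) (fibne _ _ yY)) _.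
  rewrite /h ler_nat; apply: fsubset_leq_card; apply/fsubsetP => w.
  case/sumsetP => ab /sumsetP[a aA [b bB ->]] [v2 v2V ->].
  rewrite mem_fib2.
  have -> : (x + y + v, a + b + v2) = (x, a) + (y, b) + (v, v2) by [].
  by rewrite !mem_sumset // ?mem_fsetprod /= ?vV ?v2V // -mem_fib2.
have Hset1 := @beta_set R K1 p V1.
have := @fun_ineq R K1 V1 e (beta p V1) (beta p V2) e0 e1 (beta_ge0 p V2) Hset1
  (#|` X| + #|` Y|)%N X Y f g h (leqnn _) fpos gpos hpos hyp.
have -> : \sum_(x <- X) f x = #|` A|%:R.
  rewrite /f -natr_sum fiber_card // => w wA; apply/imfsetP; exists w => //.
have -> : \sum_(x <- Y) g x = #|` B|%:R.
  rewrite /g -natr_sum fiber_card // => w wA; apply/imfsetP; exists w => //.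
have -> : \sum_(z <- sumset (sumset X Y) V1) h z = #|` C|%:R.
  rewrite /h -natr_sum fiber_card // => w.
  case/sumsetP => ab /sumsetP[a aA [b bB ->]] [v vV ->] /=.
  rewrite mem_fsetprod in vV; case/andP: vV => v1 _.
  by rewrite !mem_sumset //; apply/imfsetP; [exists a | exists b].
by rewrite [beta p V2 * _]mulrC.
Qed.

Lemma sumset_neq0 (K : zmodType) (A B : {fset K}) : A != fset0 -> B != fset0 ->
  sumset A B != fset0.
Proof.
move=> /fset0Pn[a aA] /fset0Pn[b bB]; apply/fset0Pn; exists (a + b).
exact: mem_sumset.
Qed.

Lemma fsetprod_neq0 (K1 K2 : zmodType) (A : {fset K1}) (B : {fset K2}) :
  A != fset0 -> B != fset0 -> fsetprod A B != fset0.
Proof.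
move=> /fset0Pn[a aA] /fset0Pn[b bB]; apply/fset0Pn; exists (a, b).
by rewrite mem_fsetprod aA bB.
Qed.

Lemma beta_empty (R : realType) (K : zmodType) (p : R) : beta p (@fset0 K) <= 0.
Proof.
have n0 : [fset (0 : K)] != fset0 by apply/fset0Pn; exists 0; rewrite inE.
apply: le_trans (beta_lb p fset0 n0 n0) _.
by rewrite sumset0 mul0r.
Qed.

Lemma ratio_gt0 (R : realType) (K : zmodType) (p : R) (U A B : {fset K}) :
  U != fset0 -> A != fset0 -> B != fset0 ->
  0 < #|` sumset (sumset A B) U|%:R / den p A B.
Proof.
move=> U0 A0 B0; rewrite divr_gt0 ?den_gt0 // ltr0n cardfs_gt0.
by rewrite !sumset_neq0.
Qed.

Unset Implicit Arguments.

Theorem mainTheorem7 (R : realType) (K1 K2 : zmodType)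
  (V1 : {fset K1}) (V2 : {fset K2}) (p : R) :
  1 < p ->
  beta p (fsetprod V1 V2) = beta p V1 * beta p V2.
Proof.
move=> p1; apply/eqP; rewrite eq_le; apply/andP; split; last first.
  apply: beta_glb => A B A0 B0; rewrite ler_pdivlMr ?den_gt0 //; exact: lower.
have b10 := beta_ge0 p V1; have b20 := beta_ge0 p V2.
have [V1e|V1ne] := eqVneq V1 fset0.
  have -> : fsetprod V1 V2 = fset0.
    by apply/fsetP => w; rewrite mem_fsetprod V1e inE.
  by apply: le_trans (beta_empty _ _) _; rewrite mulr_ge0.
have [V2e|V2ne] := eqVneq V2 fset0.
  have -> : fsetprod V1 V2 = fset0.
    by apply/fsetP => w; rewrite mem_fsetprod V2e inE andbF.
  by apply: le_trans (beta_empty _ _) _; rewrite mulr_ge0.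
have Hprod : forall (A1 B1 : {fset K1}) (A2 B2 : {fset K2}),
    A1 != fset0 -> B1 != fset0 -> A2 != fset0 -> B2 != fset0 ->
    beta p (fsetprod V1 V2) <=
      (#|` sumset (sumset A1 B1) V1|%:R / den p A1 B1) *
      (#|` sumset (sumset A2 B2) V2|%:R / den p A2 B2).
  move=> A1 B1 A2 B2 A10 B10 A20 B20.
  apply: le_trans (beta_lb p _ (fsetprod_neq0 A10 A20) (fsetprod_neq0 B10 B20)) _.
  rewrite sumset_prod /den !card_fsetprod !natrM !powRM ?ler0n //.
  have d1 := den_gt0 p A10 B10; have d2 := den_gt0 p A20 B20.
  rewrite /den in d1 d2.
  rewrite le_eqVlt; apply/orP; left; apply/eqP.
  rewrite mulf_div; congr (_ / _); ring.
have n0 : forall K : zmodType, [fset (0 : K)] != fset0.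
  by move=> K; apply/fset0Pn; exists 0; rewrite inE.
have step1 : forall (A2 B2 : {fset K2}), A2 != fset0 -> B2 != fset0 ->
    beta p (fsetprod V1 V2) <= beta p V1 *
      (#|` sumset (sumset A2 B2) V2|%:R / den p A2 B2).
  move=> A2 B2 A20 B20.
  rewrite -ler_pdivrMr ?ratio_gt0 //; apply: beta_glb => A1 B1 A10 B10.
  by rewrite ler_pdivrMr ?ratio_gt0 //; apply: Hprod.
have [b1e|b1ne] := eqVneq (beta p V1) 0.
  by have := step1 _ _ (n0 K2) (n0 K2); rewrite b1e !mul0r.
have b1pos : 0 < beta p V1 by rewrite lt_def b1ne b10.
rewrite mulrC -ler_pdivrMr //; apply: beta_glb => A2 B2 A20 B20.
by rewrite ler_pdivrMr // mulrC; apply: step1.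
Qed.
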